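(* Let $\mathcal{L}$ be a linear space of random variables on $\Omega$ containing all constants, and let $P$ be a coherent$_1$ marginal prevision on $\mathcal{L}$. Then $P$ is a finitely additive expectation on $\mathcal{L}$.
   Context: Random variables are real-valued functions on a nonempty set $\Omega$; marginal previsions $P(X)$ are extended real numbers. Coherence$_1$ (marginal case): $\{P(X):X\in\mathcal{L}\}$ is coherent$_1$ if for all finitely many $X_1,\dots,X_n\in\mathcal{L}$, all real $\alpha_1,\dots,\alpha_n$ with $\alpha_j\ge0$ whenever $P(X_j)=+\infty$ and $\alpha_j\le0$ whenever $P(X_j)=-\infty$, and all real $c_1,\dots,c_n$ with $c_j=P(X_j)$ whenever it is finite, $\sup_\omega\sum_{j=1}^n\alpha_j[X_j(\omega)-c_j]\ge0$. A finitely additive expectation on $\mathcal{L}$ is a map $L:\mathcal{L}\to\mathbb{R}\cup\{\pm\infty\}$ that is nonnegative ($X\le Y$ implies $L(X)\le L(Y)$), extended-linear ($L(\alpha X+\beta Y)=\alpha L(X)+\beta L(Y)$ for all real $\alpha,\beta$ whenever the right side is not of the form $\infty-\infty$, with $0\times(\pm\infty)=0$), and satisfies $L(1)=1$. *)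

(* Defs.v *)
From mathcomp Require Import all_boot all_order all_algebra.
From mathcomp Require Import all_classical all_reals ereal.
Set Implicit Arguments. Unset Strict Implicit. Unset Printing Implicit Defensive.
Import Order.TTheory GRing.Theory Num.Theory.
Local Open Scope classical_set_scope.
Local Open Scope ring_scope.

Section Defs.
Context {R : realType} {Omega : Type}.

Definition linear_space_with_constants (L : set (Omega -> R)) : Prop :=
  (forall X Y, L X -> L Y -> L (fun w => X w + Y w)) /\
  (forall (a : R) X, L X -> L (fun w => a * X w)) /\
  (forall c : R, L (fun _ => c)).

Definition coherent1 (L : set (Omega -> R)) (P : (Omega -> R) -> \bar R) : Prop :=
  forall (n : nat) (X : 'I_n -> Omega -> R) (alpha c : 'I_n -> R),
    (forall j, L (X j)) ->
    (forall j, P (X j) = +oo%E -> 0 <= alpha j) ->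
    (forall j, P (X j) = -oo%E -> alpha j <= 0) ->
    (forall j, P (X j) \is a fin_num -> P (X j) = (c j)%:E) ->
    (0 <= ereal_sup [set (\sum_(j < n) alpha j * (X j w - c j))%:E | w in [set: Omega]])%E.

Definition fa_expectation (L : set (Omega -> R)) (P : (Omega -> R) -> \bar R) : Prop :=
  (forall X Y, L X -> L Y -> (forall w, X w <= Y w) -> (P X <= P Y)%E) /\
  (* extended linearity, with 0 * (+-oo) = 0 (mathcomp's convention) *)
  (forall (a b : R) X Y, L X -> L Y ->
     ~ (((a%:E * P X)%E = +oo%E /\ (b%:E * P Y)%E = -oo%E) \/
        ((a%:E * P X)%E = -oo%E /\ (b%:E * P Y)%E = +oo%E)) ->
     P (fun w => a * X w + b * Y w) = (a%:E * P X + b%:E * P Y)%E) /\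
  P (fun _ => 1) = 1%E.

End Defs.

(* Main.v *)
Require Import Defs.
From mathcomp Require Import all_boot all_order all_algebra.
From mathcomp Require Import all_classical all_reals ereal.
From mathcomp Require Import lra.
Import Order.TTheory GRing.Theory Num.Theory.
Local Open Scope classical_set_scope.
Local Open Scope ring_scope.

Definition pickr {R : realType} (M : R) (t : \bar R) : R :=
  if t is +oo%E then M else fine t.

Lemma choose3 (R : realType) (t1 t2 t3 : \bar R) (k : R) :
  t1 != -oo%E -> t2 != -oo%E -> t3 != -oo%E -> (k%:E < t1 + t2 + t3)%E ->
  exists r1 r2 r3 : R,
    [/\ (t1 \is a fin_num -> r1 = fine t1), (t2 \is a fin_num -> r2 = fine t2),
        (t3 \is a fin_num -> r3 = fine t3) & k < r1 + r2 + r3].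
Proof.
move=> h1 h2 h3 hk.
pose M : R := `|k| + `|fine t1| + `|fine t2| + `|fine t3| + 1.
exists (pickr M t1), (pickr M t2), (pickr M t3).
have nk := ler_norm k; have pk := normr_ge0 k.
have g1 := ler_norm (- fine t1); have g2 := ler_norm (- fine t2);
have g3 := ler_norm (- fine t3).
rewrite !normrN in g1 g2 g3.
have p1 := normr_ge0 (fine t1); have p2 := normr_ge0 (fine t2);
have p3 := normr_ge0 (fine t3).
move: hk h1 h2 h3 g1 g2 g3 p1 p2 p3; rewrite /M; clear M.
case: t1 => [x||]; case: t2 => [y||]; case: t3 => [z||] //=;
  rewrite ?normr0 => hk _ _ _ g1 g2 g3 p1 p2 p3; split => //; try lra.

Qed.
Definition cfun {R : realType} (a r : R) (p : \bar R) : R :=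
  match p with y%:E => y | _ => if a == 0 then 0 else r / a end.

Lemma cfunE (R : realType) (a r : R) (p : \bar R) :
  ((a%:E * p)%E \is a fin_num -> r = fine (a%:E * p)%E) -> a * cfun a r p = r.
Proof.
case: p => [y||] /= h.
- by rewrite h.
- case: eqP => [a0|/eqP a0]; first by rewrite h a0 ?mul0e ?mulr0.
  by rewrite mulrC divfK.
- case: eqP => [a0|/eqP a0]; first by rewrite h a0 ?mul0e ?mulr0.
  by rewrite mulrC divfK.
Qed.

Lemma cfun_fin (R : realType) (a r : R) (p : \bar R) :
  p \is a fin_num -> p = (cfun a r p)%:E.
Proof. by case: p. Qed.

Lemma sign_ok (R : realType) (a : R) (p : \bar R) :
  (a%:E * p)%E != -oo%E -> (p = +oo%E -> 0 <= a) /\ (p = -oo%E -> a <= 0).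
Proof.
move=> h; split => hp; rewrite hp in h.
- rewrite leNgt; apply/negP => ha; move: h; rewrite mulry ltr0_sg //.
  by rewrite mulN1e.
- rewrite leNgt; apply/negP => ha; move: h; rewrite mulrNy gtr0_sg //.
  by rewrite mul1e.
Qed.

Lemma core (R : realType) (Omega : Type) (w0 : Omega)
  (L : set (Omega -> R)) (P : (Omega -> R) -> \bar R) :
  coherent1 L P ->
  forall (X1 X2 X3 : Omega -> R) (a1 a2 a3 k : R),
  L X1 -> L X2 -> L X3 ->
  (forall w, a1 * X1 w + a2 * X2 w + a3 * X3 w <= k) ->
  (a1%:E * P X1)%E != -oo%E -> (a2%:E * P X2)%E != -oo%E ->
  (a3%:E * P X3)%E != -oo%E ->
  (a1%:E * P X1 + a2%:E * P X2 + a3%:E * P X3 <= k%:E)%E.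
Proof.
move=> HC X1 X2 X3 a1 a2 a3 k L1 L2 L3 Hw h1 h2 h3.
rewrite leNgt; apply/negP => hk.
have [r1 [r2 [r3 [e1 e2 e3 hr]]]] := @choose3 R _ _ _ k h1 h2 h3 hk.
pose c1 := cfun a1 r1 (P X1); pose c2 := cfun a2 r2 (P X2);
pose c3 := cfun a3 r3 (P X3).
have q1 : a1 * c1 = r1 by apply: cfunE.
have q2 : a2 * c2 = r2 by apply: cfunE.
have q3 : a3 * c3 = r3 by apply: cfunE.
have [s1 t1] := @sign_ok R _ _ h1; have [s2 t2] := @sign_ok R _ _ h2; have [s3 t3] := @sign_ok R _ _ h3.
have := HC 3 (fun j : 'I_3 => nth X1 [:: X1; X2; X3] j)
  (fun j : 'I_3 => nth 0 [:: a1; a2; a3] j)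
  (fun j : 'I_3 => nth 0 [:: c1; c2; c3] j).
have HH : forall (Q : 'I_3 -> Prop), Q ord0 -> Q (lift ord0 ord0) ->
   Q (lift ord0 (lift ord0 ord0)) -> forall j, Q j.
  move=> Q Q0 Q1 Q2 [[|[|[|j]]] hj] //.
  - by rewrite (_ : Ordinal hj = ord0) //; apply: val_inj.
  - by rewrite (_ : Ordinal hj = lift ord0 ord0) //; apply: val_inj.
  - by rewrite (_ : Ordinal hj = lift ord0 (lift ord0 ord0)) //; apply: val_inj.
have /[swap]/[apply] : forall j : 'I_3, L (nth X1 [:: X1; X2; X3] j) by apply: HH.
have /[swap]/[apply] : forall j : 'I_3, P (nth X1 [:: X1; X2; X3] j) = +oo%E ->
   0 <= nth 0 [:: a1; a2; a3] j by apply: HH.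
have /[swap]/[apply] : forall j : 'I_3, P (nth X1 [:: X1; X2; X3] j) = -oo%E ->
   nth 0 [:: a1; a2; a3] j <= 0 by apply: HH.
have /[swap]/[apply] : forall j : 'I_3, P (nth X1 [:: X1; X2; X3] j) \is a fin_num ->
   P (nth X1 [:: X1; X2; X3] j) = (nth 0 [:: c1; c2; c3] j)%:E
  by apply: HH; apply: cfun_fin.
apply/negP; rewrite -ltNge.
apply: (@le_lt_trans _ _ (k - (r1 + r2 + r3))%:E); last by rewrite lte_fin; lra.
apply: ge_ereal_sup => _ [w _ <-]; rewrite lee_fin.
rewrite !big_ord_recr big_ord0 /=.
rewrite !mulrBr q1 q2 q3; have := Hw w; lra.
Qed.
Lemma ext_combine (R : realType) (u v z : \bar R) :
  ~ ((u = +oo%E /\ v = -oo%E) \/ (u = -oo%E /\ v = +oo%E)) ->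
  (u != -oo%E -> v != -oo%E -> z != +oo%E -> (u + v + (-1)%:E * z <= 0)%E) ->
  (u != +oo%E -> v != +oo%E -> z != -oo%E -> (- u + - v + 1%:E * z <= 0)%E) ->
  z = (u + v)%E.
Proof.
case: u => [x||]; case: v => [y||]; case: z => [t||] H Lo Up //=;
  rewrite ?mul1e ?mulN1e /= in Lo Up;
  try (by exfalso; apply: H; tauto);
  try (by move: (Lo isT isT isT));
  try (by move: (Up isT isT isT)).
- move: (Lo isT isT isT) (Up isT isT isT); rewrite -!EFinD !lee_fin => h1 h2.
  congr (_%:E); lra.
Qed.

Theorem lemma5p4 (R : realType) (Omega : Type) (w0 : Omega)
  (L : set (Omega -> R)) (P : (Omega -> R) -> \bar R) :
  linear_space_with_constants L ->
  coherent1 L P ->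
  fa_expectation L P.
Proof.
move=> [HD [HS HK]] HC.
have L0 := HK 0.
have Z0 : forall Q : Omega -> R, (0%:E * P Q)%E != -oo%E by move=> Q; rewrite mul0e.
split; [|split].
- move=> X Y LX LY Hle.
  have := @core R Omega w0 L P HC X Y (fun _ => 0) 1 (-1) 0 0 LX LY L0.
  have Hw : forall w, 1 * X w + (-1) * Y w + 0 * 0 <= 0.
    by move=> w; have := Hle w; lra.
  move=> /(_ Hw); rewrite mul1e mulN1e mul0e adde0.
  by case: (P X) => [x||]; case: (P Y) => [y||] //=; rewrite ?leey ?leNye //;
    move=> /(_ isT isT isT) //; rewrite -EFinD !lee_fin; lra.
- move=> a b X Y LX LY Hn.
  have LZ : L (fun w => a * X w + b * Y w) by apply: HD; apply: HS.
  apply: ext_combine => // [hu hv hz|hu hv hz].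
  + apply: (@core R Omega w0 L P HC X Y _ a b (-1) 0 LX LY LZ) => //.
    * by move=> w; lra.
    * by rewrite mulN1e; move: hz; case: (P _).
  + have := (@core R Omega w0 L P HC X Y _ (-a) (-b) 1 0 LX LY LZ).
    rewrite !EFinN !mulNe; apply => //.
    * by move=> w; lra.
    * by move: hu; case: (_ * _)%E.
    * by move: hv; case: (_ * _)%E.
    * by rewrite mul1e.
- have L1 := HK 1.
  have A := (@core R Omega w0 L P HC _ _ _ 1 0 0 1 L1 L0 L0).
  have B := (@core R Omega w0 L P HC _ _ _ (-1) 0 0 (-1) L1 L0 L0).
  move: A B; rewrite !mul0e !adde0 mul1e mulN1e.
  have w1 : forall w : Omega, 1 * 1 + 0 * 0 + 0 * 0 <= 1 :> R by move=> _; rewrite !mulr0 !addr0 mul1r.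
  have w2 : forall w : Omega, (-1) * 1 + 0 * 0 + 0 * 0 <= -1 :> R by move=> _; rewrite !mulr0 !addr0 mulN1r.
  move=> /(_ w1) A /(_ w2) B.
  move: A B; case: (P (fun _ => 1)) => [x||] //=.
  + move=> /(_ isT isT isT) A /(_ isT isT isT) B.
    rewrite lee_fin in A; rewrite lee_fin in B; clear w1 w2; congr (_%:E); lra.
  + by move=> /(_ isT isT isT).
  + by move=> _ /(_ isT isT isT).
Qed.
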